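(* Let $0\le\beta\le1$ and $f\in\mathcal{A}_{\beta}$ with $f(z)=z+\sum_{n=2}^{\infty}a_nz^n$, and let $\gamma_1=\frac12a_2$ and $\gamma_2=\frac12\left(a_3-\frac12a_2^2\right)$ be its first two logarithmic coefficients. Then $$-\frac{1}{\sqrt{5-6\beta+2\beta^2}}\le|\gamma_2|-|\gamma_1|\le\frac{1}{3-2\beta}.$$ Both inequalities are sharp.
   Context: $\mathbb{D}=\{z\in\mathbb{C}:|z|<1\}$. For $\beta\in[0,1]$, $\mathcal{A}_{\beta}$ is the set of analytic functions $f$ on $\mathbb{D}$ with $f(0)=0$, $f'(0)=1$ (so $f(z)=z+\sum_{n\ge2}a_nz^n$) such that $\operatorname{Re}\big(\beta f(z)/z+(1-\beta)f'(z)\big)>0$ for all $z\in\mathbb{D}$. The logarithmic coefficients $\gamma_n$ are defined by $\log\frac{f(z)}{z}=2\sum_{n\ge1}\gamma_nz^n$ near $0$ (with $\log1=0$), which gives $\gamma_1=a_2/2$, $\gamma_2=\frac12(a_3-\frac12a_2^2)$. Sharpness: the upper bound is attained by $f$ with $\beta f(z)/z+(1-\beta)f'(z)=\frac{1+z^2}{1-z^2}$, the lower bound by $f$ with $\beta f(z)/z+(1-\beta)f'(z)=\frac{1-z^2}{1-\frac{2(2-\beta)}{\sqrt{5-6\beta+2\beta^2}}z+z^2}$. *)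

(* Defs.v *)
From Stdlib Require Import Reals.
From Coquelicot Require Import Coquelicot.
Open Scope R_scope.

Definition in_disk (z : C) : Prop := Cmod z < 1.

(* [in_A beta f a]: f is analytic on the unit disk with Taylor expansion
   f(z) = sum_n a_n z^n (a_0 = 0, a_1 = 1), and
   Re(beta f(z)/z + (1-beta) f'(z)) > 0 on the disk, where f' is the
   complex derivative.  (At z = 0 the expression equals 1 > 0 automatically,
   since f(z)/z -> a_1 = 1 and f'(0) = a_1 = 1.) *)
Definition in_A (beta : R) (f : C -> C) (a : nat -> C) : Prop :=
  a 0%nat = 0%C /\ a 1%nat = 1%C /\
  (forall z : C, in_disk z -> is_pseries a z (f z)) /\
  (forall z : C, in_disk z -> z <> 0%C ->
     exists df : C, is_derive (K := C_AbsRing) (V := C_NormedModule) f z df /\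
       0 < Re (RtoC beta * (f z / z) + RtoC (1 - beta) * df)%C).

(* First two logarithmic coefficients, log(f(z)/z) = 2 sum gamma_n z^n. *)
Definition gamma1 (a : nat -> C) : C := (a 2%nat / 2)%C.
Definition gamma2 (a : nat -> C) : C := ((a 3%nat - a 2%nat * a 2%nat / 2) / 2)%C.

(* Main.v *)
Require Import Defs.
From Stdlib Require Import Reals Lra Lia Psatz ClassicalEpsilon.
From Coquelicot Require Import Coquelicot.
Open Scope R_scope.


Lemma series_norm_le (x : nat -> C) (b : nat -> R) (l : C) (L : R) :
  is_series x l -> is_series b L -> (forall n, Cmod (x n) <= b n) -> Cmod l <= L.
Proof.
  intros Hx Hb Hle.
  assert (H1 : is_lim_seq (fun n => Cmod (sum_n x n)) (Cmod l)).
  { unfold is_lim_seq. eapply filterlim_comp. exact Hx.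
    exact (@filterlim_norm C_AbsRing C_NormedModule l). }
  assert (H2 : is_lim_seq (sum_n b) L) by exact Hb.
  assert (H3 : forall n, Cmod (sum_n x n) <= sum_n b n).
  { intros n. unfold sum_n. eapply Rle_trans.
    exact (@norm_sum_n_m C_AbsRing C_NormedModule x 0 n). apply sum_n_m_le. intros k. apply Hle. }
  pose proof (is_lim_seq_le _ _ _ _ H3 H1 H2) as H. simpl in H. exact H.
Qed.

Lemma ex_series_poly_geom (q : R) : 0 < q < 1 ->
  ex_series (fun n => (INR n + 1)^2 * q^n).
Proof.
  intros Hq.
  assert (Hinv : is_lim_seq (fun n => / (INR n + 1)) 0).
  { assert (H : is_lim_seq (fun n => INR n + 1) p_infty).
    { apply is_lim_seq_ext with (u := fun n => INR (S n)).
      intros n; rewrite S_INR; reflexivity.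
      apply (is_lim_seq_incr_1 INR p_infty). apply is_lim_seq_INR. }
    pose proof (is_lim_seq_inv _ _ H) as H2. simpl in H2. apply H2. discriminate. }
  assert (Hlim : is_lim_seq (fun n => Rabs ((INR (S n) + 1)^2 * q^(S n) / ((INR n + 1)^2 * q^n))) q).
  { apply is_lim_seq_ext with (u := fun n => (1 + / (INR n + 1)) * (1 + / (INR n + 1)) * q).
    - intros n. rewrite S_INR. pose proof (pos_INR n).
      assert (0 < q ^ n) by (apply pow_lt; lra).
      rewrite Rabs_pos_eq.
      + simpl. field. split; lra.
      + apply Rle_trans with 0; [lra|]. apply Rlt_le. apply Rdiv_lt_0_compat.
        apply Rmult_lt_0_compat. apply pow_lt; lra. apply pow_lt; lra.
        apply Rmult_lt_0_compat. apply pow_lt; lra. apply pow_lt; lra.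
    - cut (is_lim_seq (fun n => (1 + / (INR n + 1)) * (1 + / (INR n + 1)) * q) ((1 + 0) * (1 + 0) * q)).
      { intro H. replace ((1 + 0) * (1 + 0) * q) with q in H by ring. exact H. }
      apply is_lim_seq_mult'. apply is_lim_seq_mult';
      apply is_lim_seq_plus'; try apply is_lim_seq_const; exact Hinv.
      apply is_lim_seq_const. }
  assert (Hnz : forall n, (INR n + 1)^2 * q^n <> 0).
  { intros n. pose proof (pos_INR n). apply Rgt_not_eq. apply Rmult_lt_0_compat.
    apply pow_lt; lra. apply pow_lt; lra. }
  pose proof (ex_series_DAlembert _ q (proj2 Hq) Hnz Hlim) as H.
  apply ex_series_ext with (2 := H). intros n. apply Rabs_pos_eq.
  pose proof (pos_INR n). apply Rlt_le. apply Rmult_lt_0_compat.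
  apply pow_lt; lra. apply pow_lt; lra.
Qed.

Lemma Cmod_INR (n : nat) : Cmod (RtoC (INR n)) = INR n.
Proof. rewrite Cmod_R. apply Rabs_pos_eq. apply pos_INR. Qed.

Lemma Cmod_RtoC_pos (x : R) : 0 <= x -> Cmod (RtoC x) = x.
Proof. intros. rewrite Cmod_R. apply Rabs_pos_eq. auto. Qed.

Lemma pow_diff_bounds (z y : C) (rho : R) : 0 < rho -> Cmod z <= rho -> Cmod y <= rho ->
  forall n : nat,
    rho * Cmod (y ^ n - z ^ n)%C <= INR n * Cmod (y - z) * rho ^ n /\
    rho ^ 2 * Cmod (y ^ n - z ^ n - RtoC (INR n) * (y - z) * z ^ (n - 1))%C
      <= INR n ^ 2 * Cmod (y - z) ^ 2 * rho ^ n.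
Proof.
  intros Hr Hz Hy. set (h := (y - z)%C).
  assert (Hh : 0 <= Cmod h) by apply Cmod_ge_0.
  induction n as [|n [IH1 IH2]].
  - simpl. replace (1 - 1 - RtoC 0 * h * 1)%C with (RtoC 0) by (apply injective_projections; simpl; ring).
    replace (1 - 1)%C with (RtoC 0) by (apply injective_projections; simpl; ring).
    rewrite Cmod_0. lra.
  - assert (HE : (y ^ S n - z ^ S n = y * (y ^ n - z ^ n) + h * z ^ n)%C).
    { simpl. unfold h. ring. }
    assert (HD : (y ^ S n - z ^ S n - RtoC (INR (S n)) * h * z ^ (S n - 1)
                = z * (y ^ n - z ^ n - RtoC (INR n) * h * z ^ (n - 1)) + h * (y ^ n - z ^ n))%C).
    { replace (S n - 1)%nat with n by lia. rewrite S_INR. rewrite RtoC_plus.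
      destruct n as [|m].
      - simpl. unfold h. ring.
      - replace (S m - 1)%nat with m by lia. simpl.
        unfold h. ring. }
    assert (Hzn : Cmod (z ^ n) <= rho ^ n).
    { rewrite Cmod_pow. apply pow_incr. split; [apply Cmod_ge_0|auto]. }
    assert (Hzn0 : 0 <= rho ^ n) by (apply pow_le; lra).
    pose proof (Cmod_ge_0 (y ^ n - z ^ n)%C) as HE0.
    pose proof (Cmod_ge_0 (y ^ n - z ^ n - RtoC (INR n) * h * z ^ (n - 1))%C) as HD0.
    pose proof (pos_INR n) as Hn.
    split.
    + rewrite HE. rewrite S_INR.
      apply Rle_trans with (rho * (Cmod y * Cmod (y ^ n - z ^ n) + Cmod h * Cmod (z ^ n))).
      { apply Rmult_le_compat_l. lra. rewrite <- !Cmod_mult. apply Cmod_triangle. }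
      simpl.
      assert (A1 : Cmod y * (rho * Cmod (y ^ n - z ^ n)) <= rho * (INR n * Cmod h * rho ^ n)).
      { apply Rmult_le_compat; try lra. apply Cmod_ge_0. apply Rmult_le_pos; lra. }
      assert (A2 : Cmod h * Cmod (z ^ n) <= Cmod h * rho ^ n).
      { apply Rmult_le_compat_l; lra. }
      nra.
    + rewrite HD. rewrite S_INR.
      apply Rle_trans with (rho ^ 2 * (Cmod z * Cmod (y ^ n - z ^ n - RtoC (INR n) * h * z ^ (n - 1)) + Cmod h * Cmod (y ^ n - z ^ n))).
      { apply Rmult_le_compat_l. nra. rewrite <- !Cmod_mult. apply Cmod_triangle. }
      assert (A1 : Cmod z * (rho ^ 2 * Cmod (y ^ n - z ^ n - RtoC (INR n) * h * z ^ (n - 1))) <= rho * (INR n ^ 2 * Cmod h ^ 2 * rho ^ n)).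
      { apply Rmult_le_compat; try lra. apply Cmod_ge_0. apply Rmult_le_pos. nra. auto. }
      assert (A2 : Cmod h * (rho * Cmod (y ^ n - z ^ n)) <= Cmod h * (INR n * Cmod h * rho ^ n)).
      { apply Rmult_le_compat_l; lra. }
      replace (rho ^ S n) with (rho * rho ^ n) by (simpl; ring).
      assert (A3 : 0 <= (INR n + 1) * Cmod h ^ 2 * (rho * rho ^ n)).
      { apply Rmult_le_pos. apply Rmult_le_pos. lra. nra. nra. }
      assert (A4 : rho * (Cmod h * (rho * Cmod (y ^ n - z ^ n))) <= rho * (Cmod h * (INR n * Cmod h * rho ^ n))).
      { apply Rmult_le_compat_l; lra. }
      apply Rle_trans with (rho * (INR n ^ 2 * Cmod h ^ 2 * rho ^ n) + rho * (Cmod h * (INR n * Cmod h * rho ^ n))).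
      { replace (rho ^ 2 * (Cmod z * Cmod (y ^ n - z ^ n - RtoC (INR n) * h * z ^ (n - 1)) + Cmod h * Cmod (y ^ n - z ^ n)))
          with (Cmod z * (rho ^ 2 * Cmod (y ^ n - z ^ n - RtoC (INR n) * h * z ^ (n - 1))) + rho * (Cmod h * (rho * Cmod (y ^ n - z ^ n)))) by ring.
        lra. }
      replace ((INR n + 1) ^ 2 * Cmod h ^ 2 * (rho * rho ^ n)) with
        (rho * (INR n ^ 2 * Cmod h ^ 2 * rho ^ n) + rho * (Cmod h * (INR n * Cmod h * rho ^ n)) + (INR n + 1) * Cmod h ^ 2 * (rho * rho ^ n)) by ring.
      lra.
Qed.


Lemma pow_n_Cpow (x : C) n : @pow_n C_AbsRing x n = Cpow x n.
Proof. induction n; simpl; auto. Qed.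

Lemma pseries_C (a : nat -> C) (z l : C) :
  is_pseries a z l <-> is_series (fun n => (z ^ n * a n)%C) l.
Proof.
  unfold is_pseries. split; intros H.
  - refine (is_series_ext (K := C_AbsRing) (V := C_NormedModule) _ _ _ _ H).
    intros n. rewrite <- (pow_n_Cpow z n). reflexivity.
  - refine (is_series_ext (K := C_AbsRing) (V := C_NormedModule) _ _ _ _ H).
    intros n. rewrite <- (pow_n_Cpow z n). reflexivity.
Qed.

Lemma series_terms_bounded (x : nat -> C) (l : C) :
  is_series x l -> exists M, forall n, Cmod (x n) <= M.
Proof.
  intros H. destruct (filterlim_bounded (sum_n x)) as [M HM].
  { exists l. exact H. }
  exists (2 * M). intros n. assert (HM0 : 0 <= M).
  { eapply Rle_trans; [apply (norm_ge_0 (V := C_NormedModule))|apply (HM 0%nat)]. }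
  destruct n as [|n].
  - pose proof (HM 0%nat) as H0. rewrite sum_O in H0. change (Cmod (x 0%nat) <= M) in H0. lra.
  - pose proof (HM (S n)) as H1. pose proof (HM n) as H2.
    rewrite sum_Sn in H1.
    change (Cmod (sum_n x n + x (S n))%C <= M) in H1.
    change (Cmod (sum_n x n) <= M) in H2.
    replace (x (S n)) with ((sum_n x n + x (S n)) - sum_n x n)%C by ring.
    unfold Cminus. eapply Rle_trans. apply Cmod_triangle. rewrite Cmod_opp. lra.
Qed.

Lemma sqrt2_lt_2 : sqrt 2 < 2.
Proof. pose proof (sqrt_sqrt 2 ltac:(lra)). pose proof (sqrt_pos 2). nra. Qed.

Lemma pseries_derive (a : nat -> C) (f : C -> C) :
  (forall z, Cmod z < 1 -> is_pseries a z (f z)) ->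
  forall z, Cmod z < 1 ->
  exists g, is_series (fun n => RtoC (INR (S n)) * a (S n) * z ^ n)%C g /\
     is_derive (K:=C_AbsRing) (V:=C_NormedModule) f z g.
Proof.
  intros Hf z Hz.
  pose proof (Cmod_ge_0 z) as Hz0.
  set (rho := (1 + Cmod z) / 2). set (rho' := (3 + Cmod z) / 4).
  assert (Hrho : 0 < rho < rho') by (unfold rho, rho'; lra).
  assert (Hrho' : rho' < 1) by (unfold rho'; lra).
  assert (Hzr : Cmod z < rho) by (unfold rho; lra).
  assert (Hp' : is_series (fun n => (RtoC rho' ^ n * a n)%C) (f (RtoC rho'))).
  { apply pseries_C. apply Hf. rewrite Cmod_RtoC_pos; lra. }
  destruct (series_terms_bounded _ _ Hp') as [M HM].
  set (q := rho / rho').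
  assert (Hq : 0 < q < 1).
  { unfold q. split. apply Rdiv_lt_0_compat; lra. apply Rlt_div_l; lra. }
  set (b := fun n => (INR n + 1) ^ 2 * Cmod (a n) * rho ^ n).
  assert (Hb0 : forall n, 0 <= b n).
  { intros n. unfold b. pose proof (pos_INR n). apply Rmult_le_pos. apply Rmult_le_pos. nra.
    apply Cmod_ge_0. apply pow_le. lra. }
  assert (Hbex : ex_series b).
  { apply (ex_series_le (K := R_AbsRing) (V := R_CompleteNormedModule) b (fun n => M * ((INR n + 1) ^ 2 * q ^ n))).
    - intros n. change (norm (b n)) with (Rabs (b n)). rewrite Rabs_pos_eq by apply Hb0.
      unfold b. pose proof (HM n) as H. rewrite Cmod_mult, Cmod_pow, Cmod_RtoC_pos in H by lra.
      replace (rho ^ n) with (q ^ n * rho' ^ n).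
      2:{ rewrite <- Rpow_mult_distr. f_equal. unfold q. field. lra. }
      pose proof (pos_INR n). assert (0 <= q ^ n) by (apply pow_le; lra).
      assert (0 <= (INR n + 1) ^ 2 * q ^ n) by (apply Rmult_le_pos; nra).
      replace ((INR n + 1) ^ 2 * Cmod (a n) * (q ^ n * rho' ^ n)) with
        (((INR n + 1) ^ 2 * q ^ n) * (rho' ^ n * Cmod (a n))) by ring.
      rewrite (Rmult_comm M). apply Rmult_le_compat_l; auto.
    - apply (ex_series_scal_l (K := R_AbsRing) (V := R_NormedModule)). apply ex_series_poly_geom. auto. }
  destruct Hbex as [S2 HS2].
  assert (Htex : ex_series (fun n => RtoC (INR (S n)) * a (S n) * z ^ n)%C).
  { apply (ex_series_le (K := C_AbsRing) (V := C_CompleteNormedModule) _ (fun n => / rho * b (S n))).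
    - intros n. change (norm ?x) with (Cmod x). rewrite !Cmod_mult, Cmod_pow, Cmod_INR.
      unfold b. rewrite S_INR. simpl pow.
      pose proof (pos_INR n). pose proof (Cmod_ge_0 (a (S n))).
      assert (H1 : Cmod z ^ n <= rho ^ n) by (apply pow_incr; lra).
      assert (0 <= rho ^ n) by (apply pow_le; lra).
      replace (/ rho * ((INR n + 1 + 1) * ((INR n + 1 + 1) * 1) * Cmod (a (S n)) * (rho * rho ^ n)))
        with ((INR n + 1 + 1) * ((INR n + 1 + 1) * Cmod (a (S n)) * rho ^ n)) by (field; lra).
      assert (0 <= (INR n + 1) * Cmod (a (S n))) by nra.
      apply Rle_trans with ((INR n + 1) * Cmod (a (S n)) * rho ^ n).
      apply Rmult_le_compat_l; auto.
      assert (0 <= (INR n + 1) * Cmod (a (S n)) * rho ^ n) by nra. nra.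
    - apply (ex_series_scal_l (K := R_AbsRing) (V := R_NormedModule)).
      apply (proj1 (ex_series_incr_1 (K := R_AbsRing) (V := R_NormedModule) b)). exists S2. auto. }
  destruct Htex as [g Hg]. exists g. split; [exact Hg|].
  set (T := fun n => (RtoC (INR n) * a n * z ^ (n - 1))%C).
  assert (HT : is_series T g).
  { assert (E : plus g (opp (T 0%nat)) = g).
    { unfold T. simpl. change (plus g (opp (RtoC 0 * a 0%nat * 1)%C)) with (g + - (RtoC 0 * a 0%nat * 1))%C.
      ring. }
    assert (H2 : is_series (fun k => T (S k)) g).
    { refine (is_series_ext (K := C_AbsRing) (V := C_NormedModule) _ _ _ _ Hg).
      intros n. unfold T. replace (S n - 1)%nat with n by lia. reflexivity. }
    rewrite <- E in H2. exact (is_series_decr_1 T g H2). }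
  unfold is_derive, filterdiff. split.
  { apply is_linear_scal_l. }
  intros x Hx. apply (is_filter_lim_locally_unique (K := C_AbsRing) (V := AbsRing_NormedModule C_AbsRing)) in Hx. subst x.
  intros eps.
  set (K := Rabs S2 / rho ^ 2).
  assert (HK : 0 <= K) by (unfold K; apply Rmult_le_pos; [apply Rabs_pos|apply Rlt_le, Rinv_0_lt_compat; nra]).
  set (delta := Rmin (rho - Cmod z) (eps / (K + 1))).
  assert (Hdelta : 0 < delta).
  { unfold delta. apply Rmin_case. lra. apply Rdiv_lt_0_compat. apply cond_pos. lra. }
  exists (mkposreal (delta / 2) ltac:(lra)). intros y Hy.
  change (Cmod (y - z) < delta / 2) in Hy.
  assert (Hh : Cmod (y - z) < delta) by lra.
  assert (Hh1 : Cmod (y - z) <= rho - Cmod z) by (pose proof (Rmin_l (rho - Cmod z) (eps / (K + 1))); fold delta in H; lra).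
  assert (Hh2 : Cmod (y - z) <= eps / (K + 1)) by (pose proof (Rmin_r (rho - Cmod z) (eps / (K + 1))); fold delta in H; lra).
  assert (Hy1 : Cmod y <= rho).
  { replace y with (z + (y - z))%C by ring. eapply Rle_trans. apply Cmod_triangle. lra. }
  assert (Hfy : is_series (fun n => (y ^ n * a n)%C) (f y)) by (apply pseries_C; apply Hf; lra).
  assert (Hfz : is_series (fun n => (z ^ n * a n)%C) (f z)) by (apply pseries_C; apply Hf; lra).
  assert (Hcomb : is_series (fun n => (y ^ n * a n - z ^ n * a n - (y - z) * T n)%C)
                    (f y - f z - (y - z) * g)%C).
  { apply (is_series_minus (K := C_AbsRing) (V := C_NormedModule)).
    apply (is_series_minus (K := C_AbsRing) (V := C_NormedModule)); auto.
    apply (is_series_scal_l (K := C_AbsRing) (V := C_NormedModule)). auto. }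
  set (hh := Cmod (y - z)).
  assert (Hbs : is_series (fun n => hh ^ 2 / rho ^ 2 * b n) (hh ^ 2 / rho ^ 2 * S2)).
  { apply (is_series_scal_l (K := R_AbsRing) (V := R_NormedModule)). auto. }
  assert (Hbound := series_norm_le _ _ _ _ Hcomb Hbs).
  change (norm (minus (minus (f y) (f z)) (scal (minus y z) g)) <= eps * norm (minus y z)).
  change (Cmod (f y - f z - (y - z) * g)%C <= eps * hh).
  assert (Hhh : 0 <= hh) by apply Cmod_ge_0.
  eapply Rle_trans. apply Hbound.
  - intros n. unfold T.
    replace (y ^ n * a n - z ^ n * a n - (y - z) * (RtoC (INR n) * a n * z ^ (n - 1)))%C
      with (a n * (y ^ n - z ^ n - RtoC (INR n) * (y - z) * z ^ (n - 1)))%C by ring.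
    rewrite Cmod_mult. destruct (pow_diff_bounds z y rho ltac:(lra) ltac:(lra) Hy1 n) as [_ HD].
    unfold b. fold hh in HD. pose proof (Cmod_ge_0 (a n)).
    assert (Hr2 : 0 < rho ^ 2) by nra.
    apply Rmult_le_reg_l with (rho ^ 2); auto.
    replace (rho ^ 2 * (hh ^ 2 / rho ^ 2 * ((INR n + 1) ^ 2 * Cmod (a n) * rho ^ n)))
      with (Cmod (a n) * ((INR n + 1) ^ 2 * hh ^ 2 * rho ^ n)) by (field; lra).
    rewrite <- Rmult_assoc, (Rmult_comm (rho ^ 2)), Rmult_assoc.
    apply Rmult_le_compat_l; auto. eapply Rle_trans; [exact HD|].
    pose proof (pos_INR n). assert (0 <= rho ^ n) by (apply pow_le; lra).
    apply Rmult_le_compat_r; auto. apply Rmult_le_compat_r. nra. nra.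
  - assert (E1 : hh ^ 2 / rho ^ 2 * S2 <= hh ^ 2 * K).
    { unfold K. unfold Rdiv. assert (0 < / rho ^ 2) by (apply Rinv_0_lt_compat; nra).
      pose proof (Rle_abs S2). assert (0 <= hh ^ 2) by nra.
      replace (hh ^ 2 * (Rabs S2 * / rho ^ 2)) with ((hh ^ 2 * / rho ^ 2) * Rabs S2) by ring.
      apply Rmult_le_compat_l; auto. apply Rmult_le_pos; lra. }
    eapply Rle_trans. exact E1.
    assert (E2 : hh * (K + 1) <= eps).
    { apply Rmult_le_reg_r with (/ (K + 1)). apply Rinv_0_lt_compat; lra.
      rewrite Rmult_assoc, Rinv_r by lra. fold hh in Hh2. unfold Rdiv in Hh2. lra. }
    nra.
Qed.


Definition om (N : nat) : C := (cos (2 * PI / INR N), sin (2 * PI / INR N)).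

Lemma om_pow (N k : nat) : (om N ^ k)%C = (cos (2 * PI * INR k / INR N), sin (2 * PI * INR k / INR N)).
Proof.
  induction k as [|k IH].
  - simpl. replace (2 * PI * 0 / INR N) with 0 by (unfold Rdiv; ring). rewrite cos_0, sin_0. reflexivity.
  - rewrite Cpow_S, IH. unfold om. rewrite S_INR.
    replace (2 * PI * (INR k + 1) / INR N) with (2 * PI / INR N + 2 * PI * INR k / INR N) by (unfold Rdiv; ring).
    rewrite cos_plus, sin_plus. apply injective_projections; simpl; ring.
Qed.

Lemma om_pow_N (N : nat) : (0 < N)%nat -> (om N ^ N)%C = 1%C.
Proof.
  intros HN. rewrite om_pow. assert (0 < INR N) by (apply lt_0_INR; lia).
  replace (2 * PI * INR N / INR N) with (2 * PI) by (field; lra).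
  rewrite cos_2PI, sin_2PI. reflexivity.
Qed.

Lemma om_pow_ne1 (N e : nat) : (0 < e < N)%nat -> (om N ^ e)%C <> 1%C.
Proof.
  intros He Heq. rewrite om_pow in Heq.
  assert (HN : 0 < INR N) by (apply lt_0_INR; lia).
  assert (Hlt : INR e < INR N) by (apply lt_INR; lia).
  assert (He0 : 0 < INR e) by (apply lt_0_INR; lia).
  set (th := PI * INR e / INR N).
  assert (Hth : 0 < th < PI).
  { unfold th. split. apply Rdiv_lt_0_compat; [|lra]. pose proof PI_RGT_0. nra.
    apply Rlt_div_l. lra. pose proof PI_RGT_0. nra. }
  assert (Hc : cos (2 * th) = 1).
  { unfold th. replace (2 * (PI * INR e / INR N)) with (2 * PI * INR e / INR N) by (unfold Rdiv; ring).
    apply (f_equal fst) in Heq. simpl in Heq. exact Heq. }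
  rewrite cos_2a_sin in Hc. pose proof (sin_gt_0 th (proj1 Hth) (proj2 Hth)). nra.
Qed.

Lemma Cmod_om (N : nat) : Cmod (om N) = 1.
Proof.
  unfold om, Cmod. simpl. pose proof (sin2_cos2 (2 * PI / INR N)).
  unfold Rsqr in H. match goal with |- sqrt ?a = 1 => replace a with 1 by nra end. apply sqrt_1.
Qed.

Lemma om_pow_mod (N e : nat) : (0 < N)%nat -> (om N ^ e)%C = (om N ^ (e mod N))%C.
Proof.
  intros HN. rewrite (Nat.div_mod e N) at 1 by lia.
  rewrite Cpow_add_r, Cpow_mult_r, om_pow_N by auto. rewrite Cpow_1_l. ring.
Qed.

Lemma geom_sum_C (x : C) (n : nat) : ((x - 1) * sum_n (fun k => x ^ k) n = x ^ (S n) - 1)%C.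
Proof.
  induction n as [|n IH].
  - rewrite sum_O. simpl. ring.
  - rewrite sum_Sn. change (plus (sum_n (fun k : nat => (x ^ k)%C) n) (x ^ S n)%C)
      with (sum_n (fun k : nat => (x ^ k)%C) n + x ^ S n)%C.
    rewrite Cmult_plus_distr_l, IH. rewrite (Cpow_S x (S n)). ring.
Qed.

Lemma sum_n_C_const (c : C) n : sum_n (fun _ => c) n = (RtoC (INR (S n)) * c)%C.
Proof.
  induction n as [|n IH].
  - rewrite sum_O. simpl. ring.
  - rewrite sum_Sn, IH. assert (H : (RtoC (INR (S n)) * c + c = RtoC (INR (S (S n))) * c)%C) by (rewrite (S_INR (S n)), RtoC_plus; ring). exact H.
Qed.

Lemma Gsum (N e : nat) : (0 < N)%nat ->
  sum_n (fun k => ((om N ^ k) ^ e)%C) (N - 1) = if Nat.eqb (e mod N) 0 then RtoC (INR N) else RtoC 0.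
Proof.
  intros HN.
  assert (E : forall k, ((om N ^ k) ^ e)%C = ((om N ^ e) ^ k)%C).
  { intros k. rewrite <- !Cpow_mult_r. f_equal. lia. }
  rewrite (sum_n_ext _ _ _ E).
  destruct (Nat.eqb_spec (e mod N) 0) as [H0|H0].
  - rewrite om_pow_mod, H0 by auto. simpl (om N ^ 0)%C.
    transitivity (sum_n (fun _ : nat => RtoC 1) (N - 1)).
    { apply sum_n_ext. intros; apply Cpow_1_l. }
    rewrite sum_n_C_const. replace (S (N - 1)) with N by lia.
    assert (H : (RtoC (INR N) * 1 = RtoC (INR N))%C) by ring. exact H.
  - set (x := (om N ^ e)%C).
    assert (Hx : x <> 1%C).
    { unfold x. rewrite om_pow_mod by auto. apply om_pow_ne1. split. lia. apply Nat.mod_upper_bound. lia. }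
    assert (HxN : (x ^ N)%C = 1%C).
    { unfold x. rewrite <- Cpow_mult_r, Nat.mul_comm, Cpow_mult_r, om_pow_N by auto. apply Cpow_1_l. }
    pose proof (geom_sum_C x (N - 1)) as G. replace (S (N - 1)) with N in G by lia.
    rewrite HxN in G. replace (1 - 1)%C with (RtoC 0) in G by ring.
    destruct (Ceq_dec (sum_n (fun k => (x ^ k)%C) (N - 1)) 0) as [Hs|Hs].
    { exact Hs. }
    exfalso. assert (Hx1 : (x - 1)%C <> 0%C).
    { intros Hc. apply Hx. replace x with ((x - 1) + 1)%C by ring. rewrite Hc. ring. }
    exact (Cmult_neq_0 _ _ Hx1 Hs G).
Qed.


Lemma sum_Sn_C (a : nat -> C) n : sum_n a (S n) = (sum_n a n + a (S n))%C.
Proof. rewrite sum_Sn. reflexivity. Qed.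
Lemma sum_O_C (a : nat -> C) : sum_n a 0 = a 0%nat.
Proof. apply sum_O. Qed.

Lemma is_series_sum_n (u : nat -> nat -> C) (L : nat -> C) n :
  (forall k, is_series (u k) (L k)) ->
  is_series (fun m => sum_n (fun k => u k m) n) (sum_n L n).
Proof.
  intros H. induction n as [|n IH].
  - rewrite sum_O_C. refine (is_series_ext (K := C_AbsRing) (V := C_NormedModule) _ _ _ _ (H 0%nat)).
    intros m. rewrite sum_O_C. reflexivity.
  - rewrite sum_Sn_C.
    pose proof (is_series_plus (K := C_AbsRing) (V := C_NormedModule) _ _ _ _ IH (H (S n))) as H2.
    refine (is_series_ext (K := C_AbsRing) (V := C_NormedModule) _ _ _ _ H2).
    intros m. rewrite sum_Sn_C. reflexivity.
Qed.

Lemma is_series_fin (u : nat -> C) n0 :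
  (forall m, (n0 < m)%nat -> u m = RtoC 0) -> is_series u (sum_n u n0).
Proof.
  intros H. unfold is_series.
  apply filterlim_ext_loc with (f := fun _ => sum_n u n0).
  - exists n0. intros n Hn. induction Hn as [|n Hn IH].
    + reflexivity.
    + rewrite IH, sum_Sn_C, H by lia. rewrite Cplus_0_r. reflexivity.
  - apply filterlim_const.
Qed.

Lemma Re_sum_n (Y : nat -> C) n : Re (sum_n Y n) = sum_n (fun k => Re (Y k)) n.
Proof.
  induction n as [|n IH].
  - rewrite sum_O_C, sum_O. reflexivity.
  - rewrite sum_Sn_C, sum_Sn, <- IH. reflexivity.
Qed.

Lemma sum_n_nonneg (a : nat -> R) n : (forall k, 0 <= a k) -> 0 <= sum_n a n.
Proof.
  intros H. induction n as [|n IH].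
  - rewrite sum_O. auto.
  - rewrite sum_Sn. change (0 <= sum_n a n + a (S n)). pose proof (H (S n)). lra.
Qed.

Definition Gp (N e : nat) : C := if Nat.eqb (e mod N) 0 then RtoC 1 else RtoC 0.

Lemma Gsum' (N e : nat) : (0 < N)%nat ->
  sum_n (fun k => ((om N ^ k) ^ e)%C) (N - 1) = (RtoC (INR N) * Gp N e)%C.
Proof.
  intros HN. rewrite Gsum by auto. unfold Gp. destruct (Nat.eqb (e mod N) 0).
  - assert (H : RtoC (INR N) = (RtoC (INR N) * 1)%C) by ring. exact H.
  - assert (H : RtoC 0 = (RtoC (INR N) * 0)%C) by ring. exact H.
Qed.

Lemma Gp_eval (N m j l : nat) : (m + 2 < N)%nat -> (l <= 2)%nat -> (j <= 2)%nat ->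
  Gp N (m + j + (N - 1) * l) = if Nat.eqb (m + j) l then RtoC 1 else RtoC 0.
Proof.
  intros H1 H2 H3. unfold Gp.
  destruct (Compare_dec.le_lt_dec l (m + j)) as [Hle|Hlt].
  - rewrite <- (Nat.mod_unique (m + j + (N - 1) * l) N l (m + j - l)).
    + destruct (Nat.eqb_spec (m + j - l) 0); destruct (Nat.eqb_spec (m + j) l); auto; lia.
    + lia.
    + destruct l as [|[|[|l]]]; lia.
  - rewrite <- (Nat.mod_unique (m + j + (N - 1) * l) N (l - 1) (N + (m + j) - l)).
    + destruct (Nat.eqb_spec (N + (m + j) - l) 0); destruct (Nat.eqb_spec (m + j) l); auto; lia.
    + lia.
    + destruct l as [|[|[|l]]]; lia.
Qed.

Lemma Cmod_Gp N e : Cmod (Gp N e) <= 1.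
Proof. unfold Gp. destruct (Nat.eqb _ _). rewrite Cmod_1; lra. rewrite Cmod_0; lra. Qed.

Definition Hm (N : nat) (v0 v1 v2 : C) (m : nat) : C :=
  (v0 * Cconj v0 * Gp N (m + 0 + (N - 1) * 0) + v0 * Cconj v1 * Gp N (m + 0 + (N - 1) * 1)
 + v0 * Cconj v2 * Gp N (m + 0 + (N - 1) * 2) + v1 * Cconj v0 * Gp N (m + 1 + (N - 1) * 0)
 + v1 * Cconj v1 * Gp N (m + 1 + (N - 1) * 1) + v1 * Cconj v2 * Gp N (m + 1 + (N - 1) * 2)
 + v2 * Cconj v0 * Gp N (m + 2 + (N - 1) * 0) + v2 * Cconj v1 * Gp N (m + 2 + (N - 1) * 1)
 + v2 * Cconj v2 * Gp N (m + 2 + (N - 1) * 2))%C.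

Lemma Cmod_le_add (X Y : C) A B : Cmod X <= A -> Cmod Y <= B -> Cmod (X + Y)%C <= A + B.
Proof. intros. eapply Rle_trans. apply Cmod_triangle. lra. Qed.

Lemma Cmod_term (a b : C) N e : Cmod (a * Cconj b * Gp N e)%C <= Cmod a * Cmod b.
Proof.
  rewrite !Cmod_mult, Cmod_conj. pose proof (Cmod_Gp N e). pose proof (Cmod_ge_0 a).
  pose proof (Cmod_ge_0 b). pose proof (Cmod_ge_0 (Gp N e)).
  assert (0 <= Cmod a * Cmod b) by nra. nra.
Qed.

Lemma Hm_bound N v0 v1 v2 m : Cmod (Hm N v0 v1 v2 m) <= (Cmod v0 + Cmod v1 + Cmod v2) ^ 2.
Proof.
  unfold Hm. eapply Rle_trans.
  { repeat apply Cmod_le_add; apply Cmod_term. }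
  right. ring.
Qed.

Lemma Hm_mid N v0 v1 v2 m : (3 <= m)%nat -> (m + 2 < N)%nat -> Hm N v0 v1 v2 m = RtoC 0.
Proof.
  intros H1 H2. unfold Hm. rewrite !Gp_eval by lia.
  repeat match goal with |- context [Nat.eqb ?a ?b] => destruct (Nat.eqb_spec a b); [lia|] end.
  ring.
Qed.

Lemma Hm_0 N v0 v1 v2 : (2 < N)%nat -> Hm N v0 v1 v2 0 = (v0 * Cconj v0 + v1 * Cconj v1 + v2 * Cconj v2)%C.
Proof. intros H. unfold Hm. rewrite !Gp_eval by lia. simpl. ring. Qed.
Lemma Hm_1 N v0 v1 v2 : (3 < N)%nat -> Hm N v0 v1 v2 1 = (v0 * Cconj v1 + v1 * Cconj v2)%C.
Proof. intros H. unfold Hm. rewrite !Gp_eval by lia. simpl. ring. Qed.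
Lemma Hm_2 N v0 v1 v2 : (4 < N)%nat -> Hm N v0 v1 v2 2 = (v0 * Cconj v2)%C.
Proof. intros H. unfold Hm. rewrite !Gp_eval by lia. simpl. ring. Qed.


Ltac ceq := match goal with |- ?a = ?b => change (@eq C a b) end.

Lemma stepB (N m : nat) (Z v0 v1 v2 : C) (r : R) : (0 < N)%nat -> Cmod Z = 1 -> (Z ^ N)%C = 1%C ->
 ((RtoC r * Z) ^ m * ((v0 + v1 * Z + v2 * Z ^ 2) * Cconj (v0 + v1 * Z + v2 * Z ^ 2)))%C =
 (RtoC (r ^ m) * (v0 * Cconj v0 * Z ^ (m + 0 + (N - 1) * 0) + v0 * Cconj v1 * Z ^ (m + 0 + (N - 1) * 1)
 + v0 * Cconj v2 * Z ^ (m + 0 + (N - 1) * 2) + v1 * Cconj v0 * Z ^ (m + 1 + (N - 1) * 0)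
 + v1 * Cconj v1 * Z ^ (m + 1 + (N - 1) * 1) + v1 * Cconj v2 * Z ^ (m + 1 + (N - 1) * 2)
 + v2 * Cconj v0 * Z ^ (m + 2 + (N - 1) * 0) + v2 * Cconj v1 * Z ^ (m + 2 + (N - 1) * 1)
 + v2 * Cconj v2 * Z ^ (m + 2 + (N - 1) * 2)))%C.
Proof.
  intros HN HZ HZN.
  assert (Hc : Cconj Z = (Z ^ (N - 1))%C).
  { assert (E1 : (Z * Z ^ (N - 1))%C = 1%C).
    { rewrite <- Cpow_S. replace (S (N - 1)) with N by lia. auto. }
    assert (E2 : (Z * Cconj Z)%C = 1%C).
    { rewrite <- Cmod2_conj, HZ. apply injective_projections; simpl; ring. }
    transitivity (Cconj Z * (Z * Z ^ (N - 1)))%C.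
    { rewrite E1. ring. }
    transitivity ((Z * Cconj Z) * Z ^ (N - 1))%C. ring. rewrite E2. ring. }
  rewrite !Cplus_conj, !Cmult_conj, !Cpow_conj, Hc.
  rewrite !Cpow_add_r, !Cpow_mult_r, Cpow_mult_l, <- RtoC_pow.
  ring.
Qed.

Lemma Hterm (c : nat -> C) (r : R) (N m : nat) (v0 v1 v2 : C) : (0 < N)%nat ->
  sum_n (fun k => c m * (RtoC r * om N ^ k) ^ m *
          ((v0 + v1 * om N ^ k + v2 * (om N ^ k) ^ 2) * Cconj (v0 + v1 * om N ^ k + v2 * (om N ^ k) ^ 2)))%C (N - 1)
  = (c m * RtoC (r ^ m) * (RtoC (INR N) * Hm N v0 v1 v2 m))%C.
Proof.
  intros HN.
  assert (HZ : forall k, Cmod (om N ^ k)%C = 1).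
  { intros k. rewrite Cmod_pow, Cmod_om. apply pow1. }
  assert (HZN : forall k, ((om N ^ k) ^ N)%C = 1%C).
  { intros k. rewrite <- Cpow_mult_r, Nat.mul_comm, Cpow_mult_r, om_pow_N by auto. apply Cpow_1_l. }
  set (e := fun j l => (m + j + (N - 1) * l)%nat).
  assert (Hgen : forall n, sum_n (fun k => c m * (RtoC r * om N ^ k) ^ m *
          ((v0 + v1 * om N ^ k + v2 * (om N ^ k) ^ 2) * Cconj (v0 + v1 * om N ^ k + v2 * (om N ^ k) ^ 2)))%C n
   = (c m * RtoC (r ^ m) * (v0 * Cconj v0 * sum_n (fun k => (om N ^ k) ^ (m + 0 + (N - 1) * 0)) n
    + v0 * Cconj v1 * sum_n (fun k => (om N ^ k) ^ (m + 0 + (N - 1) * 1)) n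
    + v0 * Cconj v2 * sum_n (fun k => (om N ^ k) ^ (m + 0 + (N - 1) * 2)) n
    + v1 * Cconj v0 * sum_n (fun k => (om N ^ k) ^ (m + 1 + (N - 1) * 0)) n
    + v1 * Cconj v1 * sum_n (fun k => (om N ^ k) ^ (m + 1 + (N - 1) * 1)) n
    + v1 * Cconj v2 * sum_n (fun k => (om N ^ k) ^ (m + 1 + (N - 1) * 2)) n
    + v2 * Cconj v0 * sum_n (fun k => (om N ^ k) ^ (m + 2 + (N - 1) * 0)) n
    + v2 * Cconj v1 * sum_n (fun k => (om N ^ k) ^ (m + 2 + (N - 1) * 1)) n
    + v2 * Cconj v2 * sum_n (fun k => (om N ^ k) ^ (m + 2 + (N - 1) * 2)) n))%C).
  { induction n as [|n IH].
    - rewrite !sum_O_C. rewrite <- (Cmult_assoc (c m)), (stepB N m (om N ^ 0)%C) by auto. ceq. ring.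
    - rewrite !sum_Sn_C. rewrite IH. rewrite <- (Cmult_assoc (c m) ((RtoC r * om N ^ S n) ^ m)%C), (stepB N m (om N ^ S n)%C) by auto. ceq. ring. }
  rewrite Hgen. rewrite !Gsum' by auto. unfold Hm. ceq. ring.
Qed.


Lemma Re_RtoC_mult (a : R) (z : C) : Re (RtoC a * z)%C = a * Re z.
Proof. destruct z as [x y]. unfold Re; simpl. ring. Qed.
Lemma Re_mult_RtoC (z : C) (a : R) : Re (z * RtoC a)%C = Re z * a.
Proof. destruct z as [x y]. unfold Re; simpl. ring. Qed.

Lemma pow_le_one (t : R) (k : nat) : 0 <= t <= 1 -> t ^ k <= 1.
Proof. intros H. rewrite <- (pow1 k). apply pow_incr. lra. Qed.

Lemma toeplitz_pos (c : nat -> C) (p : C -> C) (r K s : R) :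
  0 < r -> 0 <= K -> 0 <= s < 1 ->
  (forall m, Cmod (c m) * r ^ m <= K * s ^ m) ->
  c 0%nat = RtoC 1 ->
  (forall z, Cmod z = r -> is_series (fun m => c m * z ^ m)%C (p z) /\ 0 <= Re (p z)) ->
  forall v0 v1 v2 : C,
  0 <= Re (v0 * Cconj v0 + v1 * Cconj v1 + v2 * Cconj v2
           + c 1%nat * RtoC r * (v0 * Cconj v1 + v1 * Cconj v2)
           + c 2%nat * RtoC (r ^ 2) * (v0 * Cconj v2))%C.
Proof.
  intros Hr HK Hs Hc Hc0 Hp v0 v1 v2.
  match goal with |- 0 <= Re ?x => set (main := x) end.
  assert (Heps : forall eps, 0 < eps -> - eps <= Re main).
  { intros eps Heps.
    set (V := Cmod v0 + Cmod v1 + Cmod v2).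
    set (t := sqrt s).
    assert (Ht : 0 <= t < 1).
    { split. apply sqrt_pos. unfold t. rewrite <- sqrt_1. apply sqrt_lt_1_alt; lra. }
    assert (Hts : t * t = s) by (apply sqrt_sqrt; lra).
    set (A := V ^ 2 * K).
    assert (HA : 0 <= A) by (unfold A; apply Rmult_le_pos; [apply pow2_ge_0|auto]).
    assert (Hpos : 0 < eps * (1 - t) / (A + 1)).
    { apply Rdiv_lt_0_compat. apply Rmult_lt_0_compat; lra. lra. }
    destruct (pow_lt_1_zero t ltac:(rewrite Rabs_pos_eq; lra) _ Hpos) as [n0 Hn0].
    set (N := (n0 + 6)%nat).
    assert (HN : (0 < N)%nat) by (unfold N; lia).
    assert (HtN : t ^ (N - 2) < eps * (1 - t) / (A + 1)).
    { pose proof (Hn0 (N - 2)%nat ltac:(unfold N; lia)) as H.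
      rewrite Rabs_pos_eq in H by (apply pow_le; lra). auto. }
    set (P := fun k => (v0 + v1 * om N ^ k + v2 * (om N ^ k) ^ 2)%C).
    set (zk := fun k => (RtoC r * om N ^ k)%C).
    assert (Hzk : forall k, Cmod (zk k) = r).
    { intros k. unfold zk. rewrite Cmod_mult, Cmod_pow, Cmod_om, pow1, Cmod_RtoC_pos; lra. }
    set (Y := fun k => (p (zk k) * (P k * Cconj (P k)))%C).
    assert (HY : forall k, is_series (fun m => c m * (zk k) ^ m * (P k * Cconj (P k)))%C (Y k)).
    { intros k. destruct (Hp (zk k) (Hzk k)) as [Hs1 _].
      pose proof (is_series_scal_l (K:=C_AbsRing) (V:=C_NormedModule) (P k * Cconj (P k))%C _ _ Hs1) as H.
      replace (Y k) with (scal (P k * Cconj (P k))%C (p (zk k))).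
      2:{ unfold Y. change (scal ?a ?b) with (Cmult a b). ceq. ring. }
      refine (is_series_ext (K:=C_AbsRing) (V:=C_NormedModule) _ _ _ _ H).
      intros m. change (scal ?a ?b) with (Cmult a b). ceq. ring. }
    pose proof (is_series_sum_n (fun k m => (c m * (zk k) ^ m * (P k * Cconj (P k)))%C) Y (N - 1) HY) as HsumY.
    set (S := (RtoC (/ INR N) * sum_n Y (N - 1))%C).
    assert (HNR : 0 < INR N) by (apply lt_0_INR; auto).
    assert (HS : is_series (fun m => c m * RtoC (r ^ m) * Hm N v0 v1 v2 m)%C S).
    { pose proof (is_series_scal_l (K:=C_AbsRing) (V:=C_NormedModule) (RtoC (/ INR N)) _ _ HsumY) as H.
      refine (is_series_ext (K:=C_AbsRing) (V:=C_NormedModule) _ _ _ _ H).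
      intros m. change (scal ?a ?b) with (Cmult a b). unfold zk, P. rewrite Hterm by auto.
      ceq. transitivity (c m * RtoC (r ^ m) * Hm N v0 v1 v2 m * (RtoC (/ INR N) * RtoC (INR N)))%C.
      ring. rewrite <- RtoC_mult, Rinv_l by lra. ring. }
    assert (HReS : 0 <= Re S).
    { unfold S. rewrite Re_RtoC_mult. apply Rmult_le_pos.
      apply Rlt_le, Rinv_0_lt_compat; auto.
      rewrite Re_sum_n. apply sum_n_nonneg. intros k. unfold Y.
      rewrite <- Cmod2_conj. rewrite Re_mult_RtoC.
      apply Rmult_le_pos. apply (Hp (zk k) (Hzk k)). apply pow2_ge_0. }
    set (u := fun m => if Nat.leb m 2 then (c m * RtoC (r ^ m) * Hm N v0 v1 v2 m)%C else RtoC 0).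
    assert (Hu : is_series u main).
    { replace main with (sum_n u 2).
      - apply is_series_fin. intros m Hm2. unfold u. destruct (Nat.leb_spec m 2); [lia| reflexivity].
      - rewrite !sum_Sn_C, sum_O_C. unfold u. simpl Nat.leb. cbv iota.
        rewrite Hm_0, Hm_1, Hm_2 by (unfold N; lia). unfold main. rewrite Hc0.
        apply injective_projections; simpl; ring. }
    assert (Herr : is_series (fun m => c m * RtoC (r ^ m) * Hm N v0 v1 v2 m - u m)%C (S - main)%C).
    { exact (is_series_minus (K:=C_AbsRing) (V:=C_NormedModule) _ _ _ _ HS Hu). }
    assert (Hgeo : is_series (fun m => A * t ^ (N - 2) * t ^ m) (A * t ^ (N - 2) * / (1 - t))).
    { pose proof (is_series_geom t ltac:(rewrite Rabs_pos_eq; lra)) as H.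
      exact (is_series_scal_l (K:=R_AbsRing) (V:=R_NormedModule) (A * t ^ (N - 2)) _ _ H). }
    assert (Hbd : Cmod (S - main)%C <= A * t ^ (N - 2) * / (1 - t)).
    { apply (series_norm_le _ _ _ _ Herr Hgeo). intros m.
      assert (Htm : 0 <= t ^ m) by (apply pow_le; lra).
      assert (HtN0 : 0 <= t ^ (N - 2)) by (apply pow_le; lra).
      assert (Hnn : 0 <= A * t ^ (N - 2) * t ^ m) by (apply Rmult_le_pos; [apply Rmult_le_pos|]; auto).
      unfold u. destruct (Nat.leb_spec m 2).
      - replace (c m * RtoC (r ^ m) * Hm N v0 v1 v2 m - (c m * RtoC (r ^ m) * Hm N v0 v1 v2 m))%C
          with (RtoC 0) by ring. rewrite Cmod_0. auto.
      - destruct (Compare_dec.le_lt_dec (N - 2) m) as [Hm1|Hm1].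
        + replace (c m * RtoC (r ^ m) * Hm N v0 v1 v2 m - RtoC 0)%C with (c m * RtoC (r ^ m) * Hm N v0 v1 v2 m)%C by ring.
          rewrite !Cmod_mult, Cmod_RtoC_pos by (apply pow_le; lra).
          pose proof (Hc m) as Hcm. pose proof (Hm_bound N v0 v1 v2 m) as HHm. fold V in HHm.
          pose proof (Cmod_ge_0 (Hm N v0 v1 v2 m)).
          assert (Hsm : s ^ m <= t ^ (N - 2) * t ^ m).
          { rewrite <- Hts, Rpow_mult_distr. apply Rmult_le_compat_r; auto.
            replace m with ((N - 2) + (m - (N - 2)))%nat at 1 by lia. rewrite pow_add.
            pose proof (pow_le_one t (m - (N - 2)) ltac:(lra)).
            assert (0 <= t ^ (m - (N - 2))) by (apply pow_le; lra). nra. }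
          assert (0 <= Cmod (c m) * r ^ m) by (apply Rmult_le_pos; [apply Cmod_ge_0|apply pow_le; lra]).
          assert (0 <= s ^ m) by (apply pow_le; lra).
          apply Rle_trans with (K * s ^ m * V ^ 2).
          { apply Rmult_le_compat; auto. }
          unfold A. replace (V ^ 2 * K * t ^ (N - 2) * t ^ m) with (K * V ^ 2 * (t ^ (N - 2) * t ^ m)) by ring.
          replace (K * s ^ m * V ^ 2) with (K * V ^ 2 * s ^ m) by ring.
          apply Rmult_le_compat_l; auto. apply Rmult_le_pos; auto. apply pow2_ge_0.
        + rewrite Hm_mid by (unfold N in *; lia).
          replace (c m * RtoC (r ^ m) * RtoC 0 - RtoC 0)%C with (RtoC 0) by ring. rewrite Cmod_0. auto. }
    assert (Hre : Re (S - main)%C <= A * t ^ (N - 2) * / (1 - t)).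
    { eapply Rle_trans; [|exact Hbd]. eapply Rle_trans; [apply Rle_abs|apply re_le_Cmod]. }
    assert (HRe : Re (S - main)%C = Re S - Re main) by (unfold Re; simpl; ring).
    assert (Hfin : A * t ^ (N - 2) * / (1 - t) <= eps).
    { apply Rmult_le_reg_r with (1 - t). lra. rewrite Rmult_assoc, Rinv_l by lra.
      assert (HtN0 : 0 <= t ^ (N - 2)) by (apply pow_le; lra).
      apply Rmult_lt_compat_r with (r := A + 1) in HtN; [|lra].
      unfold Rdiv in HtN. rewrite Rmult_assoc, Rinv_l, Rmult_1_r in HtN by lra. nra. }
    lra. }
  destruct (Rle_or_lt 0 (Re main)) as [H|H]; auto.
  pose proof (Heps (- Re main / 2) ltac:(lra)). lra.
Qed.


Lemma cara_ident (x1 x2 eta : C) :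
  forall y, y = (- Cconj (Cconj x1 + eta * x1) / 2)%C ->
  Re (RtoC 1 * Cconj (RtoC 1) + y * Cconj y + Cconj eta * Cconj (Cconj eta)
      + x1 * (RtoC 1 * Cconj y + y * Cconj (Cconj eta)) + x2 * (RtoC 1 * Cconj (Cconj eta)))%C
  = 1 + (Re eta ^ 2 + Im eta ^ 2) - (Re x1 ^ 2 + Im x1 ^ 2) / 4
      - (Re eta ^ 2 + Im eta ^ 2) * (Re x1 ^ 2 + Im x1 ^ 2) / 4
      + Re (eta * (x2 - x1 * x1 / 2))%C.
Proof.
  intros y Hy. subst y. destruct x1 as [a b], x2 as [c d], eta as [e f]. unfold Re, Im. simpl. field.
Qed.

Lemma cara (x1 x2 : C) :
  (forall v0 v1 v2 : C, 0 <= Re (v0 * Cconj v0 + v1 * Cconj v1 + v2 * Cconj v2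
           + x1 * (v0 * Cconj v1 + v1 * Cconj v2) + x2 * (v0 * Cconj v2))%C) ->
  Cmod (x2 - x1 * x1 / 2)%C <= 2 - Cmod x1 ^ 2 / 2.
Proof.
  intros H.
  assert (Key : forall eta : C, Re eta ^ 2 + Im eta ^ 2 = 1 ->
            0 <= 2 - (Re x1 ^ 2 + Im x1 ^ 2) / 2 + Re (eta * (x2 - x1 * x1 / 2))%C).
  { intros eta He.
    pose proof (H (RtoC 1) (- Cconj (Cconj x1 + eta * x1) / 2)%C (Cconj eta)) as H1.
    rewrite (cara_ident x1 x2 eta _ eq_refl) in H1. rewrite He in H1. lra. }
  set (w := (x2 - x1 * x1 / 2)%C).
  rewrite Cmod2_alt.
  destruct (Req_dec (Cmod w) 0) as [Hw|Hw].
  - rewrite Hw. pose proof (Key (RtoC 1) ltac:(unfold Re, Im; simpl; ring)) as K1.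
    apply Cmod_eq_0 in Hw. fold w in K1. rewrite Hw in K1.
    replace (Re (RtoC 1 * RtoC 0)%C) with 0 in K1 by (unfold Re; simpl; ring). lra.
  - set (R0 := Cmod w).
    assert (HR : 0 < R0) by (pose proof (Cmod_ge_0 w); unfold R0 in *; lra).
    assert (HR2 : R0 ^ 2 = Re w ^ 2 + Im w ^ 2) by (unfold R0; apply Cmod2_alt).
    set (eta := (- Re w / R0, Im w / R0) : C).
    assert (He : Re eta ^ 2 + Im eta ^ 2 = 1).
    { unfold eta. change (Re (- Re w / R0, Im w / R0)) with (- Re w / R0).
      change (Im (- Re w / R0, Im w / R0)) with (Im w / R0).
      replace ((- Re w / R0) ^ 2 + (Im w / R0) ^ 2) with ((Re w ^ 2 + Im w ^ 2) / R0 ^ 2) by (field; lra).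
      rewrite <- HR2. field. lra. }
    pose proof (Key eta He) as K1. fold w in K1.
    replace (Re (eta * w)%C) with (- R0) in K1.
    + lra.
    + unfold eta. destruct w as [w1 w2]. unfold Re, Im in *. simpl in *.
      apply Rmult_eq_reg_r with R0; [|lra]. field_simplify; [|lra]. nra.
Qed.


Lemma final_real (beta G2 al u : R) : 0 <= beta <= 1 ->
  let A := 2 - beta in let B := 3 - 2 * beta in
  0 <= G2 -> 0 <= al -> 0 <= u -> u <= 2 - A ^ 2 * al ^ 2 / 2 ->
  G2 <= u / (2 * B) + al ^ 2 * (A ^ 2 - B) / (4 * B) ->
  al ^ 2 * (A ^ 2 - B) / (4 * B) - u / (2 * B) <= G2 ->
  - (1 / sqrt (5 - 6 * beta + 2 * beta ^ 2)) <= G2 - al / 2 /\ G2 - al / 2 <= 1 / (3 - 2 * beta).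
Proof.
  intros Hb A B HG Hal Hu Hu2 Hup Hlo.
  assert (HB : 1 <= B) by (unfold B; lra).
  assert (HA : 1 <= A) by (unfold A; lra).
  assert (HAB : A ^ 2 - B = (1 - beta) ^ 2) by (unfold A, B; ring).
  set (D := 5 - 6 * beta + 2 * beta ^ 2).
  assert (HD : D = 2 * A ^ 2 - B) by (unfold D, A, B; ring).
  assert (HD1 : 1 <= D) by (unfold D; nra).
  set (sg := sqrt D).
  assert (Hsg2 : sg * sg = D) by (apply sqrt_sqrt; lra).
  assert (Hsg : 0 < sg) by (apply sqrt_lt_R0; lra).
  assert (H4 : B <= 2 * sg).
  { assert (B * B <= 4 * D) by (unfold D, B; nra). nra. }
  split.
  -
    set (v := al / 2).
    assert (HGlo : v ^ 2 * D / B - 1 / B <= G2).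
    { eapply Rle_trans; [|exact Hlo]. rewrite HD. unfold v.
      apply Rmult_le_reg_r with (4 * B). lra.
      replace ((al / 2) ^ 2 * (2 * A ^ 2 - B) / B - 1 / B) with (al ^ 2 * (2 * A ^ 2 - B) / (4 * B) - 4 / (4 * B)) by (field; lra).
      replace ((al ^ 2 * (A ^ 2 - B) / (4 * B) - u / (2 * B)) * (4 * B)) with (al ^ 2 * (A ^ 2 - B) - 2 * u) by (field; lra).
      replace ((al ^ 2 * (2 * A ^ 2 - B) / (4 * B) - 4 / (4 * B)) * (4 * B)) with (al ^ 2 * (2 * A ^ 2 - B) - 4) by (field; lra).
      nra. }
    fold v. fold sg.
    destruct (Rle_or_lt (v * sg) 1) as [Hv|Hv].
    + assert (v <= 1 / sg).
      { apply Rmult_le_reg_r with sg; auto. replace (1 / sg * sg) with 1 by (field; lra). lra. }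
      lra.
    + assert (Hfac : 0 <= (sg * v - 1) * (sg * sg * v + sg - B)).
      { apply Rmult_le_pos. nra. nra. }
      assert (Hgoal : - (1 / sg) <= v ^ 2 * D / B - 1 / B - v).
      { apply Rmult_le_reg_r with (B * sg). nra.
        replace (- (1 / sg) * (B * sg)) with (- B) by (field; lra).
        replace ((v ^ 2 * D / B - 1 / B - v) * (B * sg)) with (v ^ 2 * D * sg - sg - v * B * sg) by (field; lra).
        rewrite <- Hsg2. nra. }
      lra.
  -
    assert (G2 <= 1 / B - al ^ 2 / 4).
    { eapply Rle_trans; [exact Hup|].
      apply Rmult_le_reg_r with (4 * B). lra.
      replace ((u / (2 * B) + al ^ 2 * (A ^ 2 - B) / (4 * B)) * (4 * B)) with (2 * u + al ^ 2 * (A ^ 2 - B)) by (field; lra).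
      replace ((1 / B - al ^ 2 / 4) * (4 * B)) with (4 - al ^ 2 * B) by (field; lra).
      nra. }
    fold B. nra.
Qed.


Lemma real_terms_bounded (b : nat -> R) : ex_series b -> exists B, forall n, Rabs (b n) <= B.
Proof.
  intros Hb. destruct (filterlim_bounded (K := R_AbsRing) (V := R_NormedModule) (sum_n b)) as [M HM].
  { destruct Hb as [l Hl]. exists l. exact Hl. }
  exists (2 * M). intros n. assert (HM0 : 0 <= M).
  { eapply Rle_trans; [apply (norm_ge_0 (V := R_NormedModule))|apply (HM 0%nat)]. }
  destruct n as [|n].
  - pose proof (HM 0%nat) as H0. rewrite sum_O in H0. change (Rabs (b 0%nat) <= M) in H0. lra.
  - pose proof (HM (S n)) as H1. pose proof (HM n) as H2.
    rewrite sum_Sn in H1.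
    change (Rabs (sum_n b n + b (S n)) <= M) in H1.
    change (Rabs (sum_n b n) <= M) in H2.
    replace (b (S n)) with ((sum_n b n + b (S n)) - sum_n b n) by ring.
    eapply Rle_trans. apply Rabs_triang. rewrite Rabs_Ropp. lra.
Qed.

Lemma geo_bound (a : nat -> C) (f : C -> C) :
  (forall z, Cmod z < 1 -> is_pseries a z (f z)) -> forall r, 0 < r < 1 ->
  exists K s, 0 <= K /\ 0 <= s < 1 /\ forall m, INR (S m) * Cmod (a (S m)) * r ^ m <= K * s ^ m.
Proof.
  intros Hf r Hr.
  set (r2 := (1 + r) / 2).
  assert (Hr2 : r < r2 < 1) by (unfold r2; lra).
  assert (Hp : is_series (fun n => (RtoC r2 ^ n * a n)%C) (f (RtoC r2))).
  { apply pseries_C. apply Hf. rewrite Cmod_RtoC_pos; lra. }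
  destruct (series_terms_bounded _ _ Hp) as [M HM].
  assert (HM0 : 0 <= M) by (eapply Rle_trans; [apply Cmod_ge_0|apply (HM 0%nat)]).
  set (q := r / r2).
  assert (Hq : 0 < q < 1) by (unfold q; split; [apply Rdiv_lt_0_compat; lra|apply Rlt_div_l; lra]).
  set (t := sqrt q).
  assert (Ht : 0 < t < 1).
  { split. apply sqrt_lt_R0; lra. unfold t. rewrite <- sqrt_1. apply sqrt_lt_1_alt; lra. }
  assert (Htt : t * t = q) by (apply sqrt_sqrt; lra).
  destruct (real_terms_bounded _ (ex_series_poly_geom t Ht)) as [B HB].
  assert (HB0 : 0 <= B) by (eapply Rle_trans; [apply Rabs_pos|apply (HB 0%nat)]).
  exists (M * B / r2), t. split. apply Rmult_le_pos. apply Rmult_le_pos; auto. apply Rlt_le, Rinv_0_lt_compat; lra.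
  split. lra. intros m.
  pose proof (HM (S m)) as H1. rewrite Cmod_mult, Cmod_pow, Cmod_RtoC_pos in H1 by lra.
  pose proof (HB m) as H2. rewrite Rabs_pos_eq in H2.
  2:{ apply Rmult_le_pos. pose proof (pos_INR m). nra. apply pow_le; lra. }
  assert (Hq1 : r ^ m = q ^ m * r2 ^ m).
  { rewrite <- Rpow_mult_distr. f_equal. unfold q. field. lra. }
  assert (Hq2 : q ^ m = t ^ m * t ^ m) by (rewrite <- Htt, Rpow_mult_distr; ring).
  pose proof (pos_INR m). pose proof (Cmod_ge_0 (a (S m))).
  assert (Htm : 0 <= t ^ m) by (apply pow_le; lra).
  assert (Hr2m : 0 < r2 ^ m) by (apply pow_lt; lra).
  assert (E1 : (INR m + 1) * t ^ m <= B).
  { eapply Rle_trans; [|exact H2]. assert (0 <= (INR m + 1) * t ^ m) by nra. nra. }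
  rewrite S_INR, Hq1, Hq2.
  replace (M * B / r2 * t ^ m) with ((M / r2) * (B * t ^ m)) by (field; lra).
  assert (E2 : Cmod (a (S m)) * r2 ^ m <= M / r2).
  { apply Rmult_le_reg_r with r2. lra. replace (M / r2 * r2) with M by (field; lra).
    simpl in H1. nra. }
  replace ((INR m + 1) * Cmod (a (S m)) * (t ^ m * t ^ m * r2 ^ m)) with
    ((Cmod (a (S m)) * r2 ^ m) * ((INR m + 1) * t ^ m * t ^ m)) by ring.
  apply Rmult_le_compat; try nra.
Qed.


Lemma necessity (beta : R) (f : C -> C) (a : nat -> C) : 0 <= beta <= 1 -> in_A beta f a ->
  - (1 / sqrt (5 - 6 * beta + 2 * beta ^ 2)) <= Cmod (gamma2 a) - Cmod (gamma1 a)
  /\ Cmod (gamma2 a) - Cmod (gamma1 a) <= 1 / (3 - 2 * beta).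
Proof.
  intros Hb [Ha0 [Ha1 [Hser Hpos]]].
  set (c := fun m => (RtoC (beta + (1 - beta) * (INR m + 1)) * a (S m))%C).
  set (p := fun z => (RtoC beta * (f z / z) + RtoC (1 - beta) * C_derive f z)%C).
  set (A := 2 - beta). set (B := 3 - 2 * beta).
  assert (Hc0 : c 0%nat = RtoC 1).
  { unfold c. rewrite Ha1. simpl. replace (beta + (1 - beta) * (0 + 1)) with 1 by ring. ring. }
  assert (Hc1 : c 1%nat = (RtoC A * a 2%nat)%C).
  { unfold c, A. f_equal. f_equal. simpl. ring. }
  assert (Hc2 : c 2%nat = (RtoC B * a 3%nat)%C).
  { unfold c, B. f_equal. f_equal. simpl. ring. }
  set (al := Cmod (a 2%nat)).
  set (w := (RtoC B * a 3%nat - RtoC (A ^ 2) * a 2%nat * a 2%nat / 2)%C).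
  set (u := Cmod w).
  assert (HA : 1 <= A) by (unfold A; lra). assert (HB : 1 <= B) by (unfold B; lra).
  assert (Hr : forall r, 0 < r < 1 -> r ^ 2 * u <= 2 - A ^ 2 * al ^ 2 * r ^ 2 / 2).
  { intros r Hr.
    destruct (geo_bound a f Hser r Hr) as [K [s [HK [Hs Hgeo]]]].
    assert (Hcb : forall m, Cmod (c m) * r ^ m <= K * s ^ m).
    { intros m. eapply Rle_trans; [|apply Hgeo]. unfold c. rewrite Cmod_mult.
      rewrite Cmod_RtoC_pos. 2:{ pose proof (pos_INR m). nra. }
      apply Rmult_le_compat_r. apply pow_le; lra. apply Rmult_le_compat_r. apply Cmod_ge_0.
      rewrite S_INR. pose proof (pos_INR m). nra. }
    assert (Hp : forall z, Cmod z = r -> is_series (fun m => c m * z ^ m)%C (p z) /\ 0 <= Re (p z)).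
    { intros z Hz.
      assert (Hin : in_disk z) by (unfold in_disk; lra).
      assert (Hnz : z <> RtoC 0).
      { intros E. rewrite E, Cmod_0 in Hz. lra. }
      destruct (Hpos z Hin Hnz) as [df [Hd Hre]].
      destruct (pseries_derive a f Hser z ltac:(unfold in_disk in Hin; lra)) as [g [Hg Hdg]].
      assert (E1 : C_derive f z = g) by (apply is_C_derive_unique; auto).
      assert (E2 : df = g) by (rewrite <- E1; symmetry; apply is_C_derive_unique; auto).
      subst df. split.
      - assert (Hdec := is_pseries_decr_1 a z (/ z)%C (f z) ltac:(change (Cmult (/ z) z = RtoC 1); field; auto) (Hser z Hin)).
        apply (proj1 (pseries_C _ _ _)) in Hdec.
        pose proof (is_series_scal_l (K:=C_AbsRing) (V:=C_NormedModule) (RtoC beta) _ _ Hdec) as H1.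
        pose proof (is_series_scal_l (K:=C_AbsRing) (V:=C_NormedModule) (RtoC (1 - beta)) _ _ Hg) as H2.
        pose proof (is_series_plus (K:=C_AbsRing) (V:=C_NormedModule) _ _ _ _ H1 H2) as H3.
        replace (p z) with (plus (scal (RtoC beta) (scal (/ z)%C (plus (f z) (opp (a 0%nat)))))
                             (scal (RtoC (1 - beta)) g)).
        + refine (is_series_ext (K:=C_AbsRing) (V:=C_NormedModule) _ _ _ _ H3).
          intros m. change (plus ?x ?y) with (Cplus x y). change (scal ?x ?y) with (Cmult x y).
          unfold PS_decr_1, c. rewrite S_INR, RtoC_plus. apply injective_projections; simpl; ring.
        + rewrite Ha0. assert (Hv : (RtoC beta * (/ z * (f z + - RtoC 0)) + RtoC (1 - beta) * g = p z)%C).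
          { unfold p. rewrite E1. field. auto. }
          exact Hv.
      - unfold p. rewrite E1. lra. }
    pose proof (toeplitz_pos c p r K s (proj1 Hr) HK Hs Hcb Hc0 Hp) as HT.
    pose proof (cara _ _ HT) as Hcara.
    rewrite Hc1, Hc2 in Hcara.
    replace (RtoC B * a 3%nat * RtoC (r ^ 2) - RtoC A * a 2%nat * RtoC r * (RtoC A * a 2%nat * RtoC r) / 2)%C
      with (RtoC (r ^ 2) * w)%C in Hcara by (unfold w; rewrite !RtoC_pow; field).
    rewrite Cmod_mult, Cmod_RtoC_pos in Hcara by (apply pow_le; lra).
    rewrite !Cmod_mult, !Cmod_RtoC_pos in Hcara by lra.
    fold u al in Hcara. replace ((A * al * r) ^ 2) with (A ^ 2 * al ^ 2 * r ^ 2) in Hcara by ring. lra. }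
  assert (Hlim : u <= 2 - A ^ 2 * al ^ 2 / 2).
  { set (X := u + A ^ 2 * al ^ 2 / 2).
    assert (HX0 : 0 <= X) by (unfold X, u, al; pose proof (Cmod_ge_0 w); pose proof (Cmod_ge_0 (a 2%nat)); nra).
    destruct (Rle_or_lt X 2) as [H|H]. unfold X in H; lra.
    set (r := sqrt ((2 / X + 1) / 2)).
    assert (Hrr : r * r = (2 / X + 1) / 2).
    { apply sqrt_sqrt. assert (0 < 2 / X) by (apply Rdiv_lt_0_compat; lra). lra. }
    assert (H2X : 2 / X < 1) by (apply Rlt_div_l; lra).
    assert (H2X0 : 0 < 2 / X) by (apply Rdiv_lt_0_compat; lra).
    assert (Hr0 : 0 < r) by (apply sqrt_lt_R0; lra).
    assert (Hr1 : r < 1) by nra.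
    pose proof (Hr r (conj Hr0 Hr1)) as Hc. exfalso.
    assert (Hc' : r ^ 2 * X <= 2) by (unfold X; nra).
    replace (r ^ 2) with ((2 / X + 1) / 2) in Hc' by (rewrite <- Hrr; ring).
    assert (((2 / X + 1) / 2) * X = (2 + X) / 2) by (field; lra). lra. }
  assert (Hg2 : gamma2 a = (w * RtoC (/ (2 * B)) + a 2%nat * a 2%nat * RtoC ((A ^ 2 - B) / (4 * B)))%C).
  { unfold gamma2, w. 
    apply injective_projections; simpl; field; lra. }
  assert (HAB : 0 <= (A ^ 2 - B) / (4 * B)).
  { apply Rdiv_le_0_compat. unfold A, B. nra. lra. }
  assert (HX : Cmod (w * RtoC (/ (2 * B)))%C = u / (2 * B)).
  { rewrite Cmod_mult, Cmod_RtoC_pos. reflexivity. apply Rlt_le, Rinv_0_lt_compat. lra. }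
  assert (HY : Cmod (a 2%nat * a 2%nat * RtoC ((A ^ 2 - B) / (4 * B)))%C = al ^ 2 * (A ^ 2 - B) / (4 * B)).
  { rewrite !Cmod_mult, Cmod_RtoC_pos by auto. fold al. unfold Rdiv. ring. }
  assert (Hup : Cmod (gamma2 a) <= u / (2 * B) + al ^ 2 * (A ^ 2 - B) / (4 * B)).
  { rewrite Hg2, <- HX, <- HY. apply Cmod_triangle. }
  assert (Hlo : al ^ 2 * (A ^ 2 - B) / (4 * B) - u / (2 * B) <= Cmod (gamma2 a)).
  { rewrite <- HX, <- HY.
    replace (a 2%nat * a 2%nat * RtoC ((A ^ 2 - B) / (4 * B)))%C
      with (gamma2 a + - (w * RtoC (/ (2 * B))))%C by (rewrite Hg2; ring).
    pose proof (Cmod_triangle (gamma2 a) (- (w * RtoC (/ (2 * B))))%C). rewrite Cmod_opp in H. lra. }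
  assert (Hg1 : Cmod (gamma1 a) = al / 2).
  { unfold gamma1. rewrite Cmod_div. rewrite Cmod_R, Rabs_pos_eq by lra. reflexivity.
    intros E. apply (f_equal fst) in E. simpl in E. lra. }
  rewrite Hg1.
  apply (final_real beta (Cmod (gamma2 a)) al u Hb); auto.
  apply Cmod_ge_0. apply Cmod_ge_0. apply Cmod_ge_0.
Qed.


Lemma is_series_R0 : is_series (fun _ : nat => 0) 0.
Proof.
  unfold is_series. apply filterlim_ext with (f := fun _ => 0).
  - intros n. rewrite sum_n_const. simpl. ring.
  - apply filterlim_const.
Qed.

Lemma is_series_C_unique (x : nat -> C) (l1 l2 : C) : is_series x l1 -> is_series x l2 -> l1 = l2.
Proof.
  intros H1 H2.
  pose proof (is_series_minus (K:=C_AbsRing) (V:=C_NormedModule) _ _ _ _ H1 H2) as H.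
  assert (Hb := series_norm_le _ _ _ _ H is_series_R0).
  assert (Cmod (l1 - l2)%C <= 0).
  { apply Hb. intros n. change (Cmod (x n - x n)%C <= 0).
    replace (x n - x n)%C with (RtoC 0) by ring. rewrite Cmod_0. lra. }
  pose proof (Cmod_ge_0 (l1 - l2)%C).
  assert (E : Cmod (l1 - l2)%C = 0) by lra. apply Cmod_eq_0 in E.
  replace l1 with ((l1 - l2) + l2)%C by ring. rewrite E. ring.
Qed.

Lemma is_series_geom_C (q : C) : Cmod q < 1 -> is_series (fun n => (q ^ n)%C) (/ (RtoC 1 - q))%C.
Proof.
  intros Hq.
  assert (Hq1 : (RtoC 1 - q)%C <> RtoC 0).
  { intros E. assert (q = RtoC 1). { replace q with (RtoC 1 - (RtoC 1 - q))%C by ring. rewrite E. ring. }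
    subst q. rewrite Cmod_1 in Hq. lra. }
  assert (Hd : 0 < Cmod (RtoC 1 - q)%C) by (apply Cmod_gt_0; auto).
  unfold is_series. apply filterlim_locally. intros eps.
  assert (Hpos : 0 < eps * Cmod (RtoC 1 - q)%C) by (apply Rmult_lt_0_compat; [apply cond_pos|auto]).
  destruct (pow_lt_1_zero (Cmod q) ltac:(rewrite Rabs_pos_eq; [lra|apply Cmod_ge_0]) _ Hpos) as [N HN].
  exists N. intros n Hn. apply C_NormedModule_mixin_compat1.
  change (Cmod (sum_n (fun n => (q ^ n)%C) n - / (RtoC 1 - q))%C < eps).
  pose proof (geom_sum_C q n) as G.
  assert (E : (sum_n (fun n => (q ^ n)%C) n - / (RtoC 1 - q) = - (q ^ S n) / (RtoC 1 - q))%C).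
  { assert (Hq2 : (q - RtoC 1)%C <> RtoC 0).
    { intros E'. apply Hq1. replace (RtoC 1 - q)%C with (- (q - RtoC 1))%C by ring. rewrite E'. ring. }
    assert (ES : sum_n (fun n => (q ^ n)%C) n = ((q ^ S n - RtoC 1) / (q - RtoC 1))%C).
    { assert (Gen : forall S0 : C, ((q - RtoC 1) * S0 = q ^ S n - RtoC 1)%C -> S0 = ((q ^ S n - RtoC 1) / (q - RtoC 1))%C).
      { intros S0 HS0. rewrite <- HS0. field. auto. }
      apply Gen. exact G. }
    rewrite ES. field. split; auto. }
  rewrite E. unfold Cdiv. rewrite Cmod_mult, Cmod_opp, Cmod_inv, Cmod_pow by auto.
  pose proof (HN (S n) ltac:(lia)) as H. rewrite Rabs_pos_eq in H by (apply pow_le, Cmod_ge_0).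
  apply Rmult_lt_reg_r with (Cmod (RtoC 1 - q)%C); auto.
  rewrite Rmult_assoc, Rinv_l by lra. lra.
Qed.

Lemma Re_inv_gt (q : C) : Cmod q < 1 -> 1 / 2 < Re (/ (RtoC 1 - q))%C.
Proof.
  intros Hq. destruct q as [x y].
  assert (H2 : x ^ 2 + y ^ 2 < 1).
  { unfold Cmod in Hq. simpl in Hq. pose proof (sqrt_pos (x * (x * 1) + y * (y * 1))).
    assert (sqrt (x * (x * 1) + y * (y * 1)) * sqrt (x * (x * 1) + y * (y * 1)) = x * (x * 1) + y * (y * 1)).
    { apply sqrt_sqrt. nra. }
    simpl. nra. }
  unfold Re, Cinv. simpl.
  assert (Hd : 0 < (1 - x) * ((1 - x) * 1) + (0 - y) * ((0 - y) * 1)) by nra.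
  set (d := (1 + - x) * ((1 + - x) * 1) + (0 + - y) * ((0 + - y) * 1)).
  assert (Hd' : 0 < d) by (unfold d; nra).
  apply Rmult_lt_reg_r with d; auto.
  replace ((1 + - x) / d * d) with (1 + - x) by (field; lra).
  unfold d. simpl in H2. nra.
Qed.


Ltac cnorm := repeat match goal with
  | |- context [@plus ?G ?x ?y] => change (@plus G x y) with (Cplus x y)
  | |- context [@opp ?G ?x] => change (@opp G x) with (Copp x)
  | |- context [@scal ?K ?V ?x ?y] => change (@scal K V x y) with (Cmult x y)
  end.

Definition cc (u v : C) (n : nat) : C := match n with O => RtoC 1 | _ => (u ^ n + v ^ n)%C end.
Definition den (beta : R) (m : nat) : R := beta + (1 - beta) * (INR m + 1).
Definition aa (beta : R) (u v : C) (n : nat) : C :=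
  match n with O => RtoC 0 | S m => (cc u v m / RtoC (den beta m))%C end.
Definition ff (beta : R) (u v : C) (z : C) : C :=
  epsilon (inhabits (RtoC 0)) (fun l => is_pseries (aa beta u v) z l).

Lemma den_ge1 beta m : 0 <= beta <= 1 -> 1 <= den beta m.
Proof. intros. unfold den. pose proof (pos_INR m). nra. Qed.

Lemma extremal (beta : R) (u v : C) : 0 <= beta <= 1 -> Cmod u = 1 -> Cmod v = 1 ->
  in_A beta (ff beta u v) (aa beta u v) /\
  aa beta u v 2%nat = ((u + v) / RtoC (2 - beta))%C /\
  aa beta u v 3%nat = ((u * u + v * v) / RtoC (3 - 2 * beta))%C.
Proof.
  intros Hb Hu Hv.
  assert (Hden : forall m, RtoC (den beta m) <> RtoC 0).
  { intros m E. apply (f_equal fst) in E. simpl in E. pose proof (den_ge1 beta m Hb). lra. }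
  assert (Hcc : forall n, Cmod (cc u v n) <= 2).
  { intros [|n]. simpl. rewrite Cmod_1. lra. unfold cc. eapply Rle_trans. apply Cmod_triangle.
    rewrite !Cmod_pow, Hu, Hv, !pow1. lra. }
  assert (Haa : forall n, Cmod (aa beta u v n) <= 2).
  { intros [|n]. simpl. rewrite Cmod_0. lra. simpl. rewrite Cmod_div by auto.
    rewrite Cmod_RtoC_pos by (pose proof (den_ge1 beta n Hb); lra).
    pose proof (den_ge1 beta n Hb). pose proof (Hcc n). pose proof (Cmod_ge_0 (cc u v n)).
    apply Rle_trans with (Cmod (cc u v n)); [|auto].
    unfold Rdiv. rewrite <- (Rmult_1_r (Cmod (cc u v n))) at 2.
    apply Rmult_le_compat_l; auto. rewrite <- Rinv_1. apply Rinv_le_contravar; lra. }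
  assert (Hser : forall z, Cmod z < 1 -> is_pseries (aa beta u v) z (ff beta u v z)).
  { intros z Hz. unfold ff. apply epsilon_spec.
    assert (Hex : ex_series (fun n => (z ^ n * aa beta u v n)%C)).
    { apply (ex_series_le (K := C_AbsRing) (V := C_CompleteNormedModule) _ (fun n => 2 * Cmod z ^ n)).
      - intros n. change (norm ?x) with (Cmod x). rewrite Cmod_mult, Cmod_pow.
        pose proof (Haa n). assert (0 <= Cmod z ^ n) by (apply pow_le, Cmod_ge_0). nra.
      - apply (ex_series_scal_l (K := R_AbsRing) (V := R_NormedModule)). apply ex_series_geom.
        rewrite Rabs_pos_eq; [lra|apply Cmod_ge_0]. }
    destruct Hex as [l Hl]. exists l. apply pseries_C. exact Hl. }
  split; [|split].
  - split; [reflexivity|]. split.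
    { simpl. unfold den. simpl. replace (beta + (1 - beta) * (0 + 1)) with 1 by ring.
      apply injective_projections; simpl; field. }
    split. { intros z Hz. apply Hser. exact Hz. }
    intros z Hz Hnz. unfold in_disk in Hz.
    destruct (pseries_derive (aa beta u v) (ff beta u v) Hser z Hz) as [g [Hg Hdg]].
    exists g. split; [exact Hdg|].
    assert (Hdec := is_pseries_decr_1 (aa beta u v) z (/ z)%C (ff beta u v z)
       ltac:(change (Cmult (/ z) z = RtoC 1); field; auto) (Hser z Hz)).
    apply (proj1 (pseries_C _ _ _)) in Hdec.
    pose proof (is_series_scal_l (K:=C_AbsRing) (V:=C_NormedModule) (RtoC beta) _ _ Hdec) as H1.
    pose proof (is_series_scal_l (K:=C_AbsRing) (V:=C_NormedModule) (RtoC (1 - beta)) _ _ Hg) as H2.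
    pose proof (is_series_plus (K:=C_AbsRing) (V:=C_NormedModule) _ _ _ _ H1 H2) as H3.
    assert (H4 : is_series (fun m => (cc u v m * z ^ m)%C)
                 (RtoC beta * (ff beta u v z / z) + RtoC (1 - beta) * g)%C).
    { assert (Hval : (plus (scal (RtoC beta) (scal (/ z)%C (plus (ff beta u v z) (opp (aa beta u v 0%nat)))))
                      (scal (RtoC (1 - beta)) g)) = (RtoC beta * (ff beta u v z / z) + RtoC (1 - beta) * g)%C).
      { change ((RtoC beta * (/ z * (ff beta u v z + - RtoC 0)) + RtoC (1 - beta) * g)
                 = (RtoC beta * (ff beta u v z / z) + RtoC (1 - beta) * g))%C.
        field. auto. }
      rewrite <- Hval.
      refine (is_series_ext (K:=C_AbsRing) (V:=C_NormedModule) _ _ _ _ H3).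
      intros m. change (plus ?x ?y) with (Cplus x y). change (scal ?x ?y) with (Cmult x y).
      unfold PS_decr_1. simpl aa.
      assert (Gen : forall (A0 Z : C) (d : R), RtoC d <> RtoC 0 -> d = beta + (1 - beta) * (INR m + 1) ->
                (RtoC beta * (Z * (A0 / RtoC d)) + RtoC (1 - beta) * (RtoC (INR (S m)) * (A0 / RtoC d) * Z) = A0 * Z)%C).
      { intros A0 Z d Hd Ed.
        assert (Ed' : (RtoC beta + RtoC (1 - beta) * RtoC (INR (S m)) = RtoC d)%C).
        { rewrite Ed, S_INR, <- RtoC_mult, <- RtoC_plus. reflexivity. }
        transitivity (A0 / RtoC d * Z * (RtoC beta + RtoC (1 - beta) * RtoC (INR (S m))))%C.
        { ring. }
        rewrite Ed'. field. auto. }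
      apply Gen. apply Hden. reflexivity. }
    assert (Huz : Cmod (u * z)%C < 1) by (rewrite Cmod_mult, Hu; lra).
    assert (Hvz : Cmod (v * z)%C < 1) by (rewrite Cmod_mult, Hv; lra).
    pose proof (is_series_geom_C _ Huz) as G1. pose proof (is_series_geom_C _ Hvz) as G2.
    pose proof (is_series_fin (fun n => match n with O => RtoC 1 | _ => RtoC 0 end) 0 ltac:(intros [|m] Hm; [lia|reflexivity])) as G3.
    rewrite sum_O_C in G3.
    pose proof (is_series_plus (K:=C_AbsRing) (V:=C_NormedModule) _ _ _ _ G1 G2) as G12.
    pose proof (is_series_minus (K:=C_AbsRing) (V:=C_NormedModule) _ _ _ _ G12 G3) as G.
    assert (H5 : is_series (fun m => (cc u v m * z ^ m)%C)
                  (/ (RtoC 1 - u * z) + / (RtoC 1 - v * z) - RtoC 1)%C).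
    { refine (is_series_ext (K:=C_AbsRing) (V:=C_NormedModule) _ _ _ _ G).
      intros [|m]; change (plus ?x ?y) with (Cplus x y); change (opp ?x) with (Copp x).
      - apply injective_projections; simpl; ring.
      - unfold cc. rewrite !Cpow_mult_l. cnorm. ceq. ring. }
    rewrite (is_series_C_unique _ _ _ H4 H5).
    pose proof (Re_inv_gt _ Huz). pose proof (Re_inv_gt _ Hvz).
    change (0 < Re (/ (RtoC 1 - u * z))%C + Re (/ (RtoC 1 - v * z))%C - 1). lra.
  - change (aa beta u v 2%nat) with (cc u v 1 / RtoC (den beta 1))%C.
    replace (den beta 1) with (2 - beta) by (unfold den; simpl; ring).
    unfold cc. rewrite !Cpow_1_r. reflexivity.
  - change (aa beta u v 3%nat) with (cc u v 2 / RtoC (den beta 2))%C.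
    replace (den beta 2) with (3 - 2 * beta) by (unfold den; simpl; ring).
    unfold cc. simpl. f_equal. ring.
Qed.


Theorem theorem4p1 (beta : R) (hb0 : 0 <= beta) (hb1 : beta <= 1) :
  (forall (f : C -> C) (a : nat -> C), in_A beta f a ->
     - (1 / sqrt (5 - 6 * beta + 2 * beta ^ 2)) <= Cmod (gamma2 a) - Cmod (gamma1 a)
     /\ Cmod (gamma2 a) - Cmod (gamma1 a) <= 1 / (3 - 2 * beta))
  /\ (exists (f : C -> C) (a : nat -> C), in_A beta f a /\
        Cmod (gamma2 a) - Cmod (gamma1 a) = 1 / (3 - 2 * beta))
  /\ (exists (f : C -> C) (a : nat -> C), in_A beta f a /\
        Cmod (gamma2 a) - Cmod (gamma1 a) = - (1 / sqrt (5 - 6 * beta + 2 * beta ^ 2))).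
Proof.
  assert (Hb : 0 <= beta <= 1) by lra.
  split; [|split].
  - intros f a H. apply (necessity beta f a); auto.
  - destruct (extremal beta (RtoC 1) (RtoC (-1)) Hb Cmod_1 ltac:(rewrite Cmod_R; unfold Rabs; destruct (Rcase_abs (-1)); lra))
      as [HA [H2 H3]].
    exists (ff beta (RtoC 1) (RtoC (-1))), (aa beta (RtoC 1) (RtoC (-1))). split; auto.
    assert (E1 : gamma1 (aa beta (RtoC 1) (RtoC (-1))) = RtoC 0).
    { unfold gamma1. rewrite H2. apply injective_projections; simpl; field; lra. }
    assert (E2 : gamma2 (aa beta (RtoC 1) (RtoC (-1))) = RtoC (1 / (3 - 2 * beta))).
    { unfold gamma2. rewrite H2, H3. apply injective_projections; simpl; field; lra. }
    rewrite E1, E2, Cmod_0, Cmod_RtoC_pos. ring.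
    apply Rdiv_le_0_compat; lra.
  - set (A := 2 - beta). set (B := 3 - 2 * beta). set (D := 5 - 6 * beta + 2 * beta ^ 2).
    assert (HD : 1 <= D) by (unfold D; nra).
    set (sg := sqrt D).
    assert (Hsg2 : sg * sg = D) by (apply sqrt_sqrt; lra).
    assert (Hsg : 0 < sg) by (apply sqrt_lt_R0; lra).
    set (x := A / sg).
    assert (Hx2 : x * x <= 1).
    { unfold x. replace (A / sg * (A / sg)) with (A * A / D) by (rewrite <- Hsg2; field; lra).
      apply Rmult_le_reg_r with D; [lra|]. replace (A * A / D * D) with (A * A) by (field; lra). unfold A, D. nra. }
    assert (Hx0 : 0 < x) by (unfold x, A; apply Rdiv_lt_0_compat; lra).
    set (y := sqrt (1 - x * x)).
    assert (Hyy : y * y = 1 - x * x) by (apply sqrt_sqrt; lra).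
    assert (Hu : Cmod (x, y) = 1).
    { unfold Cmod. simpl. replace (x * (x * 1) + y * (y * 1)) with 1 by nra. apply sqrt_1. }
    assert (Hv : Cmod (x, - y) = 1).
    { unfold Cmod. simpl. replace (x * (x * 1) + - y * (- y * 1)) with 1 by nra. apply sqrt_1. }
    destruct (extremal beta (x, y) (x, - y) Hb Hu Hv) as [HA [H2 H3]].
    exists (ff beta (x, y) (x, - y)), (aa beta (x, y) (x, - y)). split; auto.
    assert (HxA : x * sg = A) by (unfold x; field; lra).
    assert (E1 : gamma1 (aa beta (x, y) (x, - y)) = RtoC (1 / sg)).
    { unfold gamma1. rewrite H2. apply injective_projections; simpl.
      - unfold x, A. field. split; lra.
      - field. unfold A. lra. }
    assert (E2 : gamma2 (aa beta (x, y) (x, - y)) = RtoC 0).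
    { unfold gamma2. rewrite H2, H3.
      assert (Hs2 : ((x, y) + (x, (- y)%R))%C = RtoC (2 * x)) by (apply injective_projections; simpl; ring).
      assert (Hs3 : ((x, y) * (x, y) + (x, (- y)%R) * (x, (- y)%R))%C = RtoC (2 * (2 * (x * x) - 1))).
      { apply injective_projections; simpl; nra. }
      rewrite Hs2, Hs3.
      assert (Hxx : x * x = A * A / D) by (rewrite <- Hsg2; unfold x; field; lra).
      assert (HR : ((2 * (2 * (x * x) - 1)) / (3 - 2 * beta) - (2 * x / (2 - beta)) * (2 * x / (2 - beta)) / 2) / 2 = 0).
      { replace (((2 * (2 * (x * x) - 1)) / (3 - 2 * beta) - (2 * x / (2 - beta)) * (2 * x / (2 - beta)) / 2) / 2)
          with (((2 * (2 * (x * x) - 1)) / (3 - 2 * beta) - 2 * (x * x) / ((2 - beta) * (2 - beta))) / 2) by (field; lra).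
        rewrite Hxx. unfold A, D. field. split; [|split]; nra. }
      rewrite <- HR. apply injective_projections; simpl; field; lra. }
    rewrite E1, E2, Cmod_0, Cmod_RtoC_pos. ring.
    apply Rdiv_le_0_compat; lra.
Qed.
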